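(* $\widetilde{\mathbb{K}}_{sm}$ is a Gelfand ring: for all $a,b\in\widetilde{\mathbb{K}}_{sm}$ with $a+b=1$ there exist $r,s\in\widetilde{\mathbb{K}}_{sm}$ such that $(1+ar)(1+bs)=0$.
   Context: Let $I=(0,1]$ and $\mathbb{K}\in\{\mathbb{R},\mathbb{C}\}$. $\mathcal{E}_{M,sm}$ is the set of nets $(r_\varepsilon)_{\varepsilon\in I}\in\mathbb{K}^I$ with $\varepsilon\mapsto r_\varepsilon$ smooth on $I$ and $|r_\varepsilon|=O(\varepsilon^{-N})$ as $\varepsilon\to0$ for some $N\in\mathbb{N}$; $\mathcal{N}_{sm}$ is the set of smooth nets with $|r_\varepsilon|=O(\varepsilon^m)$ for all $m\in\mathbb{N}$; $\widetilde{\mathbb{K}}_{sm}=\mathcal{E}_{M,sm}/\mathcal{N}_{sm}$. *)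

(* Defs.v *)
From Stdlib Require Import Reals.
From Coquelicot Require Import Coquelicot.
Open Scope R_scope.

Definition inI (t : R) : Prop := 0 < t <= 1.

(* l is the derivative of g at t in I, relative to I (one-sided at t = 1). *)
Definition is_derive_I {V : NormedModule R_AbsRing} (g : R -> V) (t : R) (l : V) : Prop :=
  filterlim (fun h => scal (/ h) (minus (g (t + h)) (g t)))
    (within (fun h => h <> 0 /\ inI (t + h)) (locally 0)) (locally l).

Definition smooth_I {V : NormedModule R_AbsRing} (r : R -> V) : Prop :=
  exists d : nat -> R -> V,
    (forall t, inI t -> d O t = r t) /\
    (forall n t, inI t -> is_derive_I (d n) t (d (S n) t)).

Definition moderate_sm {V : NormedModule R_AbsRing} (r : R -> V) : Prop :=
  smooth_I r /\
  exists (N : nat) (c eps0 : R), 0 < eps0 /\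
    forall e, 0 < e <= eps0 -> norm (r e) <= c * / (e ^ N).

Definition negligible_sm {V : NormedModule R_AbsRing} (r : R -> V) : Prop :=
  smooth_I r /\
  forall m : nat, exists c eps0 : R, 0 < eps0 /\
    forall e, 0 < e <= eps0 -> norm (r e) <= c * (e ^ m).

(* The Gelfand property of K~_sm = E_{M,sm}/N_{sm}, written on representatives:
   equality in the quotient means the difference of representatives is in N_sm. *)
Definition gelfand_sm {V : NormedModule R_AbsRing}
    (add mul : V -> V -> V) (one : V) : Prop :=
  forall a b : R -> V,
    moderate_sm a -> moderate_sm b ->
    negligible_sm (fun e => minus (add (a e) (b e)) one) ->
    exists r s : R -> V,
      moderate_sm r /\ moderate_sm s /\
      negligible_sm (fun e => mul (add one (mul (a e) (r e)))
                                  (add one (mul (b e) (s e)))).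

(* Main.v *)
Require Import Defs.
From Stdlib Require Import Reals Lra Lia ClassicalEpsilon Arith.Factorial.
From Coquelicot Require Import Coquelicot.
Open Scope R_scope.

Definition Fl (t:R) := within (fun h => h <> 0 /\ inI (t+h)) (locally 0).
Definition DI (f : R -> R) t l := @is_derive_I R_NormedModule f t l.

Lemma DI_iff f t l : DI f t l <-> filterlim (fun h => (f (t+h) - f t)/h) (Fl t) (locally l).
Proof.
  unfold DI, is_derive_I, Fl. split; apply filterlim_ext; intros h;
  unfold scal, minus, plus, opp; simpl; unfold mult; simpl; unfold Rdiv; ring.
Qed.

Instance Fl_filter t : Filter (Fl t).
Proof. unfold Fl. apply within_filter. apply locally_filter. Qed.

Lemma ball_R (x e y : R) : ball x e y <-> Rabs (y - x) < e.
Proof. unfold ball; simpl; unfold AbsRing_ball, abs, minus, plus, opp; simpl. tauto. Qed.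

Lemma Fl_proper t : inI t -> ProperFilter' (Fl t).
Proof.
  intros [H1 H2]. constructor; [|apply Fl_filter].
  unfold Fl, within. intros [eps He].
  set (h := - Rmin (eps/2) (t/2)).
  assert (Hm1 : 0 < Rmin (eps/2) (t/2)) by (apply Rmin_pos; generalize (cond_pos eps); lra).
  assert (Hm2 := Rmin_l (eps/2) (t/2)). assert (Hm3 := Rmin_r (eps/2) (t/2)).
  apply (He h).
  - apply ball_R. unfold h. rewrite Rminus_0_r, Rabs_Ropp, Rabs_right by lra.
    generalize (cond_pos eps); lra.
  - unfold h, inI. split; lra.
Qed.

Section Lims.
Context {T : Type} {F : (T -> Prop) -> Prop} {FF : Filter F}.
Lemma lim_mult (u v : T -> R) x y : filterlim u F (locally x) -> filterlim v F (locally y) ->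
  filterlim (fun h => u h * v h) F (locally (x*y)).
Proof. intros Hu Hv. eapply filterlim_comp_2; [exact Hu|exact Hv|]. apply (@filterlim_mult R_AbsRing x y). Qed.
Lemma lim_plus (u v : T -> R) x y : filterlim u F (locally x) -> filterlim v F (locally y) ->
  filterlim (fun h => u h + v h) F (locally (x+y)).
Proof. intros Hu Hv. eapply filterlim_comp_2; [exact Hu|exact Hv|]. apply (@filterlim_plus R_AbsRing R_NormedModule x y). Qed.
Lemma lim_const (x : R) : filterlim (fun _ => x) F (locally x).
Proof. apply filterlim_const. Qed.
End Lims.
Lemma lim_eq {T} {F : (T -> Prop) -> Prop} (u : T -> R) (x y : R) :
  filterlim u F (locally x) -> x = y -> filterlim u F (locally y).
Proof. intros H ->. exact H. Qed.

Lemma lim_id t : filterlim (fun h => h) (Fl t) (locally 0).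
Proof.
  intros P [eps He]. unfold Fl, within, filtermap. exists eps. intros y Hy _. apply He, Hy.
Qed.

Lemma Fl_ev t : Fl t (fun h => h <> 0 /\ inI (t+h)).
Proof. unfold Fl, within. apply filter_forall. tauto. Qed.

Lemma DI_cont f t l : DI f t l -> filterlim (fun h => f (t+h)) (Fl t) (locally (f t)).
Proof.
  intros H. apply DI_iff in H.
  apply (filterlim_ext_loc (fun h => f t + h * ((f (t+h) - f t)/h))).
  - eapply filter_imp; [|apply Fl_ev]. intros h [Hh _]. field. exact Hh.
  - eapply lim_eq; [|instantiate (1 := f t + 0 * l); ring].
    apply lim_plus; [apply lim_const|]. apply lim_mult; [apply lim_id| exact H].
Qed.

Lemma DI_const c t : DI (fun _ => c) t 0.
Proof.
  apply DI_iff. apply (filterlim_ext_loc (fun _ => 0)); [|apply lim_const].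
  eapply filter_imp; [|apply Fl_ev]. intros h [Hh _]. field. exact Hh.
Qed.

Lemma DI_id t : DI (fun x => x) t 1.
Proof.
  apply DI_iff. apply (filterlim_ext_loc (fun _ => 1)); [|apply lim_const].
  eapply filter_imp; [|apply Fl_ev]. intros h [Hh _]. field. exact Hh.
Qed.

Lemma DI_plus f g t l1 l2 : DI f t l1 -> DI g t l2 -> DI (fun x => f x + g x) t (l1 + l2).
Proof.
  intros H1 H2. apply DI_iff in H1. apply DI_iff in H2. apply DI_iff.
  apply (filterlim_ext_loc (fun h => (f (t+h) - f t)/h + (g (t+h) - g t)/h)).
  - eapply filter_imp; [|apply Fl_ev]. intros h [Hh _]. field. exact Hh.
  - apply lim_plus; assumption.
Qed.

Lemma DI_mult f g t l1 l2 : DI f t l1 -> DI g t l2 ->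
  DI (fun x => f x * g x) t (l1 * g t + f t * l2).
Proof.
  intros H1 H2. assert (C2 := DI_cont _ _ _ H2).
  apply DI_iff in H1. apply DI_iff in H2. apply DI_iff.
  apply (filterlim_ext_loc (fun h => (f (t+h) - f t)/h * g (t+h) + f t * ((g (t+h) - g t)/h))).
  - eapply filter_imp; [|apply Fl_ev]. intros h [Hh _]. field. exact Hh.
  - apply lim_plus; apply lim_mult; try assumption. apply lim_const.
Qed.

Lemma DI_ext f g t l : inI t -> (forall x, inI x -> f x = g x) -> DI f t l -> DI g t l.
Proof.
  intros Ht He H. apply DI_iff in H. apply DI_iff.
  apply (filterlim_ext_loc (fun h => (f (t+h) - f t)/h)); [|exact H].
  eapply filter_imp; [|apply Fl_ev]. intros h [_ Hh]. rewrite !He; auto.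
Qed.

Lemma DI_unique f t l1 l2 : inI t -> DI f t l1 -> DI f t l2 -> l1 = l2.
Proof.
  intros Ht H1 H2. apply DI_iff in H1. apply DI_iff in H2.
  eapply (@filterlim_locally_unique _ R_AbsRing R_NormedModule); [apply Fl_proper, Ht| exact H1| exact H2].
Qed.

Lemma DI_chain (psi f : R -> R) t l l' : DI f t l -> is_derive psi (f t) l' ->
  DI (fun x => psi (f x)) t (l' * l).
Proof.
  intros H Hp. assert (C := DI_cont _ _ _ H). apply DI_iff in H. apply DI_iff.
  set (y0 := f t) in *.
  set (Q := fun y => match Req_EM_T y y0 with left _ => l' | right _ => (psi y - psi y0)/(y - y0) end).
  assert (HQ : filterlim Q (locally y0) (locally l')).
  { apply is_derive_Reals in Hp. apply filterlim_locally. intros eps.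
    destruct (Hp eps (cond_pos eps)) as [del Hd].
    exists del. intros y Hy. change R in y. apply ball_R in Hy. apply ball_R. unfold Q.
    destruct (Req_EM_T y y0) as [E|E].
    - rewrite Rminus_diag, Rabs_R0. apply cond_pos.
    - specialize (Hd (y - y0)). replace (y0 + (y - y0)) with y in Hd by ring.
      apply Hd; [lra| exact Hy]. }
  apply (filterlim_ext_loc (fun h => Q (f (t+h)) * ((f (t+h) - f t)/h))).
  - eapply filter_imp; [|apply Fl_ev]. intros h [Hh _]. unfold Q. fold y0.
    destruct (Req_EM_T (f (t+h)) y0) as [E|E].
    + rewrite E. unfold y0. rewrite !Rminus_diag. unfold Rdiv. ring.
    + field. split; [exact Hh|lra].
  - apply lim_mult; [|exact H]. eapply filterlim_comp; [exact C| exact HQ].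
Qed.

Fixpoint Sn (n : nat) (f : R -> R) : Prop :=
  match n with
  | O => True
  | S m => exists f', (forall t, inI t -> DI f t (f' t)) /\ Sn m f'
  end.

Lemma Sn_ext n : forall f g, (forall x, inI x -> f x = g x) -> Sn n f -> Sn n g.
Proof.
  induction n as [|n IH]; simpl; auto.
  intros f g He [f' [Hd Hs]]. exists f'. split; auto.
  intros t Ht. eapply DI_ext; eauto.
Qed.

Lemma Sn_S n : forall f, Sn (S n) f -> Sn n f.
Proof.
  induction n as [|n IH]; simpl; auto.
  intros f [f' [Hd Hs]]. exists f'. split; auto.
Qed.

Lemma Sn_const n : forall c, Sn n (fun _ => c).
Proof.
  induction n as [|n IH]; simpl; auto.
  intros c. exists (fun _ => 0). split; auto. intros; apply DI_const.
Qed.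

Lemma Sn_plus n : forall f g, Sn n f -> Sn n g -> Sn n (fun x => f x + g x).
Proof.
  induction n as [|n IH]; simpl; auto.
  intros f g [f' [Hf Hsf]] [g' [Hg Hsg]]. exists (fun x => f' x + g' x). split.
  - intros; apply DI_plus; auto.
  - apply IH; auto.
Qed.

Lemma Sn_mult n : forall f g, Sn n f -> Sn n g -> Sn n (fun x => f x * g x).
Proof.
  induction n as [|n IH]; simpl; auto.
  intros f g Hsf0 Hsg0.
  assert (Hf1 := Sn_S n f Hsf0). assert (Hg1 := Sn_S n g Hsg0).
  destruct Hsf0 as [f' [Hf Hsf]]. destruct Hsg0 as [g' [Hg Hsg]].
  exists (fun x => f' x * g x + f x * g' x). split.
  - intros; apply DI_mult; auto.
  - apply Sn_plus; apply IH; auto.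
Qed.

Definition CInf (d : nat -> R -> R) := forall k x, is_derive (d k) x (d (S k) x).

Lemma Sn_comp n : forall d f, CInf d -> Sn n f -> Sn n (fun x => d O (f x)).
Proof.
  induction n as [|n IH]; simpl; auto.
  intros d f Hd Hsf0. assert (Hf1 := Sn_S n f Hsf0).
  destruct Hsf0 as [f' [Hf Hsf]].
  exists (fun x => d 1%nat (f x) * f' x). split.
  - intros t Ht. apply DI_chain; auto.
  - apply Sn_mult; auto.
    apply (IH (fun k => d (S k)) f); auto. intros k x; apply Hd.
Qed.

Lemma Sn_inv n : Sn n (fun x => / x).
Proof.
  induction n as [|n IH]; simpl; auto.
  exists (fun x => -1 * (/ x * / x)). split.
  - intros t [Ht Ht1].
    replace (-1 * (/ t * / t)) with (- 1 / t ^ 2 * 1) by (field; lra).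
    apply (DI_chain Rinv (fun x => x) t 1 (- 1 / t ^ 2) (DI_id t)). apply (is_derive_inv (fun x => x) t 1); [|lra].
    auto_derive; auto.
  - apply Sn_mult; [apply Sn_const| apply Sn_mult; exact IH].
Qed.

Definition SmR (f : R -> R) := forall n, Sn n f.

Lemma smooth_SmR f : @smooth_I R_NormedModule f -> SmR f.
Proof.
  intros [d [H0 Hd]].
  assert (K : forall n k, Sn n (d k)).
  { induction n as [|n IH]; simpl; auto. intros k. exists (d (S k)). split; auto.
    intros t Ht; apply Hd; auto. }
  intros n. apply (Sn_ext n (d O)); auto.
Qed.

Lemma SmR_next g : SmR g -> exists g', (forall t, inI t -> DI g t (g' t)) /\ SmR g'.
Proof.
  intros H. destruct (H 1%nat) as [g' [Hg _]]. exists g'. split; auto.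
  intros n. destruct (H (S n)) as [g'' [Hg'' Hs]].
  apply (Sn_ext n g''); auto. intros x Hx. eapply DI_unique; eauto.
Qed.

Definition nxt (x : {g | SmR g}) : {g | SmR g} :=
  let (g', H) := constructive_indefinite_description _ (SmR_next _ (proj2_sig x)) in
  exist _ g' (proj2 H).

Lemma nxt_spec x t : inI t -> DI (proj1_sig x) t (proj1_sig (nxt x) t).
Proof.
  intros Ht. unfold nxt. destruct (constructive_indefinite_description _ _) as [g' [H1 H2]].
  simpl. auto.
Qed.

Lemma SmR_smooth f : SmR f -> @smooth_I R_NormedModule f.
Proof.
  intros Hf. exists (fun n => proj1_sig (Nat.iter n nxt (exist _ f Hf))). split.
  - intros; reflexivity.
  - intros n t Ht. simpl. apply nxt_spec, Ht.
Qed.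

Lemma SmR_plus f g : SmR f -> SmR g -> SmR (fun x => f x + g x).
Proof. intros A B n; apply Sn_plus; auto. Qed.
Lemma SmR_mult f g : SmR f -> SmR g -> SmR (fun x => f x * g x).
Proof. intros A B n; apply Sn_mult; auto. Qed.
Lemma SmR_const c : SmR (fun _ => c).
Proof. intros n; apply Sn_const. Qed.
Lemma SmR_inv : SmR (fun x => / x).
Proof. intros n; apply Sn_inv. Qed.
Lemma SmR_comp d f : CInf d -> SmR f -> SmR (fun x => d O (f x)).
Proof. intros A B n; apply Sn_comp; auto. Qed.
Lemma SmR_ext f g : (forall x, inI x -> f x = g x) -> SmR f -> SmR g.
Proof. intros A B n; eapply Sn_ext; eauto. Qed.

Lemma DIC_split (F : R -> C) t (l : C) :
  @is_derive_I C_R_NormedModule F t l <->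
  DI (fun x => fst (F x)) t (fst l) /\ DI (fun x => snd (F x)) t (snd l).
Proof.
  unfold DI, is_derive_I. split.
  - intros H. pose proof (proj1 (@filterlim_locally _ _ _ (Fl_filter t) _ _) H) as H'.
    split; apply (@filterlim_locally _ _ _ (Fl_filter t)); intros eps.
    + exact (@filter_imp _ _ (Fl_filter t) _ _ (fun h B => proj1 B) (H' eps)).
    + exact (@filter_imp _ _ (Fl_filter t) _ _ (fun h B => proj2 B) (H' eps)).
  - intros [H1 H2]. apply (@filterlim_locally _ _ _ (Fl_filter t)).
    pose proof (proj1 (@filterlim_locally _ _ _ (Fl_filter t) _ _) H1) as H1'.
    pose proof (proj1 (@filterlim_locally _ _ _ (Fl_filter t) _ _) H2) as H2'.
    intros eps. exact (@filter_imp _ _ (Fl_filter t) _ _ (fun h B => B)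
      (@filter_and _ _ (Fl_filter t) _ _ (H1' eps) (H2' eps))).
Qed.

Lemma smoothC_split (F : R -> C) : @smooth_I C_R_NormedModule F ->
  SmR (fun x => fst (F x)) /\ SmR (fun x => snd (F x)).
Proof.
  intros [d [H0 Hd]]. split; apply smooth_SmR.
  - exists (fun n t => fst (d n t)). split.
    + intros t Ht. rewrite H0; auto.
    + intros n t Ht. apply (proj1 (proj1 (DIC_split _ _ _) (Hd n t Ht))).
  - exists (fun n t => snd (d n t)). split.
    + intros t Ht. rewrite H0; auto.
    + intros n t Ht. apply (proj2 (proj1 (DIC_split _ _ _) (Hd n t Ht))).
Qed.

Lemma SmC (F : R -> C) : SmR (fun x => fst (F x)) -> SmR (fun x => snd (F x)) ->
  @smooth_I C_R_NormedModule F.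
Proof.
  intros H1 H2. destruct (SmR_smooth _ H1) as [d1 [A1 B1]].
  destruct (SmR_smooth _ H2) as [d2 [A2 B2]].
  exists (fun n t => (d1 n t, d2 n t)). split.
  - intros t Ht. rewrite A1, A2; auto. simpl. destruct (F t); reflexivity.
  - intros n t Ht. apply DIC_split. simpl. split; [apply B1| apply B2]; auto.
Qed.

(* The entire function E1(z) = (1 - exp(-z))/z *)
Definition cE (n : nat) : R := (-1) ^ n / INR (fact (S n)).
Definition E1 (z : R) : R := PSeries cE z.

Lemma cE_radius : CV_radius cE = p_infty.
Proof.
  apply CV_radius_infinite_DAlembert.
  - intros n. unfold cE. apply Rmult_integral_contrapositive_currified.
    + apply pow_nonzero; lra.
    + apply Rinv_neq_0_compat, INR_fact_neq_0.
  - apply (is_lim_seq_ext (fun n => / INR (S (S n)))).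
    + intros n. unfold cE. rewrite (fact_simpl (S n)). rewrite mult_INR.
      simpl pow.
      assert (H1 := INR_fact_neq_0 (S n)). assert (H2 : INR (S (S n)) <> 0) by (apply not_0_INR; lia).
      assert (H3 : (-1) ^ n <> 0) by (apply pow_nonzero; lra).
      replace (-1 * (-1) ^ n / (INR (S (S n)) * INR (fact (S n))) / ((-1) ^ n / INR (fact (S n))))
        with (- / INR (S (S n))) by (field; auto).
      rewrite Rabs_Ropp, Rabs_right; [reflexivity|].
      apply Rle_ge, Rlt_le, Rinv_0_lt_compat, lt_0_INR; lia.
    + replace (Finite 0) with (Rbar_inv p_infty) by reflexivity.
      apply is_lim_seq_inv; [|discriminate].
      apply (is_lim_seq_ext (fun n => INR (n + 2))).
      * intros n. f_equal. lia.
      * apply (is_lim_seq_incr_n INR 2). apply is_lim_seq_INR.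
Qed.

Definition dE (k : nat) : R -> R := PSeries (Nat.iter k PS_derive cE).

Lemma dE_radius k : CV_radius (Nat.iter k PS_derive cE) = p_infty.
Proof. induction k as [|k IH]; simpl; [apply cE_radius| rewrite CV_radius_derive; exact IH]. Qed.

Lemma dE_CInf : CInf dE.
Proof.
  intros k x. unfold dE. simpl. apply is_derive_PSeries. rewrite dE_radius. exact I.
Qed.

Lemma powN z k : (- z) ^ k = (-1) ^ k * z ^ k.
Proof. induction k; simpl; [ring| rewrite IHk; ring]. Qed.

Lemma ser_eq (a : nat -> R) (l l' : R) : is_series a l -> l = l' -> is_series a l'.
Proof. intros H ->; exact H. Qed.

Lemma E1_exp z : 1 - z * E1 z = exp (- z).
Proof.
  assert (H1 := is_exp_Reals (- z)). unfold is_pseries in H1.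
  assert (H2 : is_series (fun k => scal (pow_n (- z) (S k)) (/ INR (fact (S k)))) (exp (-z) - 1)).
  { apply (is_series_incr_1 (fun k => scal (pow_n (- z) k) (/ INR (fact k)))).
    eapply ser_eq; [exact H1|].
    unfold plus, scal, one; simpl; unfold mult, one; simpl. field. }
  assert (H3 : is_series (fun k => scal (pow_n z k) (cE k)) (E1 z)).
  { apply PSeries_correct, CV_radius_inside. rewrite cE_radius. exact I. }
  apply (is_series_scal (- z)) in H3.
  apply (is_series_ext _ (fun k => scal (pow_n (- z) (S k)) (/ INR (fact (S k))))) in H3.
  - apply is_series_unique in H2. apply is_series_unique in H3.
    rewrite H2 in H3. unfold scal in H3; simpl in H3; unfold mult in H3; simpl in H3. lra.
  - intros n. unfold scal; simpl; unfold mult; simpl. rewrite !pow_n_pow. unfold cE.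
    rewrite powN. change ((-1) ^ S n) with (-1 * (-1)^n). change (z ^ S n) with (z * z^n).
    change (fact n + n * fact n)%nat with (fact (S n)).
    field. apply INR_fact_neq_0.
Qed.

Lemma E1_bound z : 0 <= z -> Rabs (E1 z) <= 1.
Proof.
  intros Hz. destruct (Req_dec z 0) as [->|Hz0].
  - unfold E1. rewrite PSeries_0. unfold cE. simpl. rewrite Rabs_right; lra.
  - assert (E := E1_exp z).
    assert (A1 := exp_ineq1_le (- z)).
    assert (A2 : exp (- z) <= 1) by (rewrite <- exp_0; apply exp_le_3 || (apply Rlt_le, exp_increasing; lra)).
    assert (B : 0 <= z * E1 z <= z) by lra.
    assert (Hzp : 0 < z) by lra.
    assert (0 <= E1 z <= 1).
    { split.
      - apply (Rmult_le_reg_l z); lra.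
      - apply (Rmult_le_reg_l z); lra. }
    rewrite Rabs_right; lra.
Qed.


Lemma exp_neg_bound m y : 0 < y -> exp (- y) <= INR (fact m) * / y ^ m.
Proof.
  intros Hy. assert (H := exp_ge_taylor y m (Rlt_le _ _ Hy)).
  assert (Hf : 0 < INR (fact m)) by apply INR_fact_lt_0.
  assert (Hp : 0 < y ^ m) by (apply pow_lt; lra).
  assert (T : y ^ m / INR (fact m) <= exp y).
  { eapply Rle_trans; [|exact H]. destruct m as [|m]; [simpl; right; reflexivity|]. rewrite tech5. cbv beta.
    assert (0 <= sum_f_R0 (fun k => y ^ k / INR (fact k)) m).
    { apply cond_pos_sum. intros k. apply Rmult_le_pos; [apply pow_le; lra|].
      apply Rlt_le, Rinv_0_lt_compat, INR_fact_lt_0. }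
    lra. }
  rewrite exp_Ropp. assert (He := exp_pos y).
  apply (Rmult_le_reg_l (exp y)); auto. rewrite Rinv_r by lra.
  apply (Rmult_le_reg_l (y ^ m / INR (fact m))).
  { apply Rdiv_lt_0_compat; auto. }
  replace (y ^ m / INR (fact m) * (exp y * (INR (fact m) * / y ^ m))) with (exp y) by (field; lra).
  lra.
Qed.

Lemma near_half (u : R -> R) c1 e1 : 0 < e1 ->
  (forall e, 0 < e <= e1 -> Rabs (u e) <= c1 * e ^ 1) ->
  exists e2, 0 < e2 /\ forall e, 0 < e <= e2 -> Rabs (u e) <= 1/2.
Proof.
  intros He1 H. assert (Hc : 0 < Rabs c1 + 1) by (generalize (Rabs_pos c1); lra).
  exists (Rmin e1 (/ (2 * (Rabs c1 + 1)))). split.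
  - apply Rmin_pos; auto. apply Rinv_0_lt_compat; lra.
  - intros e [He0 He]. assert (A1 := Rmin_l e1 (/ (2 * (Rabs c1 + 1)))).
    assert (A2 := Rmin_r e1 (/ (2 * (Rabs c1 + 1)))).
    eapply Rle_trans; [apply H; split; lra|]. simpl. rewrite Rmult_1_r.
    assert (c1 * e <= Rabs c1 * e) by (apply Rmult_le_compat_r; [lra| apply Rle_abs]).
    assert (e * (2 * (Rabs c1 + 1)) <= 1).
    { apply (Rmult_le_reg_r (/ (2 * (Rabs c1 + 1)))); [apply Rinv_0_lt_compat; lra|].
      rewrite Rmult_assoc, Rinv_r, Rmult_1_r, Rmult_1_l by lra. lra. }
    nra.
Qed.

Lemma exp_negl (A : R -> R) e2 : 0 < e2 -> (forall e, 0 < e <= e2 -> 1/8 <= A e) ->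
  forall m, exists c eps0, 0 < eps0 /\ forall e, 0 < e <= e2 ->
    Rabs (exp (- (A e * / e))) <= c * e ^ m.
Proof.
  intros He2 H m. exists (INR (fact m) * 8 ^ m), e2. split; auto.
  intros e He. rewrite Rabs_right by (apply Rle_ge, Rlt_le, exp_pos).
  assert (HA := H e He).
  eapply Rle_trans with (exp (- (/ (8 * e)))).
  - destruct (Req_dec (A e * / e) (/ (8 * e))) as [E|E]; [rewrite E; lra|].
    apply Rlt_le, exp_increasing.
    assert (/ (8 * e) <= A e * / e).
    { rewrite Rinv_mult. replace (A e * / e) with (/ e * A e) by ring.
      rewrite (Rmult_comm (/ 8)). apply Rmult_le_compat_l; [apply Rlt_le, Rinv_0_lt_compat; lra| lra]. }
    lra.
  - eapply Rle_trans; [apply (exp_neg_bound m); apply Rinv_0_lt_compat; lra|].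
    rewrite pow_inv, Rinv_inv, Rpow_mult_distr. right; ring.
Qed.

Lemma normR (x : R) : @norm _ R_NormedModule x = Rabs x.
Proof. reflexivity. Qed.

Lemma SmR_E1 f : SmR f -> SmR (fun x => E1 (f x)).
Proof. intros H. apply (SmR_comp dE f dE_CInf H). Qed.

Lemma gelfand_R : @gelfand_sm R_NormedModule Rplus Rmult 1%R.
Proof.
  intros a b [Sa [Na [ca [ea [Hea Ba]]]]] [Sb [Nb [cb [eb [Heb Bb]]]]] [_ Hn].
  apply smooth_SmR in Sa. apply smooth_SmR in Sb.
  assert (Kr : forall (u : R -> R) N c eu, SmR u -> 0 < eu ->
     (forall e, 0 < e <= eu -> @norm _ R_NormedModule (u e) <= c * / e ^ N) ->
     @moderate_sm R_NormedModule (fun e => (-1 * u e) * (/ e * E1 (u e * u e * / e)))).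
  { intros u N c eu Su Heu Bu. split.
    - apply SmR_smooth. apply (SmR_mult (fun e => -1 * u e)); [apply (SmR_mult (fun _ => -1)); [apply SmR_const|exact Su]|].
      apply (SmR_mult (fun e => / e)); [apply SmR_inv|]. apply SmR_E1.
      apply (SmR_mult (fun e => u e * u e)); [apply SmR_mult|apply SmR_inv]; auto.
    - exists (S N), c, eu. split; auto. intros e He. rewrite normR.
      specialize (Bu e He). rewrite normR in Bu.
      assert (Hz : 0 <= u e * u e * / e).
      { apply Rmult_le_pos; [nra| apply Rlt_le, Rinv_0_lt_compat; lra]. }
      assert (HE := E1_bound _ Hz).
      rewrite Rabs_mult, Rabs_mult, Rabs_m1, Rmult_1_l, Rabs_mult, (Rabs_right (/ e)) by (apply Rle_ge, Rlt_le, Rinv_0_lt_compat; lra).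
      assert (Hie : 0 < / e) by (apply Rinv_0_lt_compat; lra).
      assert (Rabs (u e) * (/ e * Rabs (E1 (u e * u e * / e))) <= Rabs (u e) * / e).
      { apply Rmult_le_compat_l; [apply Rabs_pos|]. nra. }
      eapply Rle_trans; [exact H|].
      replace (c * / e ^ S N) with ((c * / e ^ N) * / e) by (simpl; field; split; [apply pow_nonzero|]; lra).
      apply Rmult_le_compat_r; lra. }
  exists (fun e => (-1 * a e) * (/ e * E1 (a e * a e * / e))), (fun e => (-1 * b e) * (/ e * E1 (b e * b e * / e))).
  pose proof (Kr a Na ca ea Sa Hea Ba) as Mr. pose proof (Kr b Nb cb eb Sb Heb Bb) as Ms.
  split; [exact Mr|]. split; [exact Ms|].
  apply proj1, smooth_SmR in Mr. apply proj1, smooth_SmR in Ms.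
  assert (EQ : forall e, 0 < e ->
    (1 + a e * ((-1 * a e) * (/ e * E1 (a e * a e * / e)))) * (1 + b e * ((-1 * b e) * (/ e * E1 (b e * b e * / e))))
    = exp (- ((a e * a e + b e * b e) * / e))).
  { intros e He.
    replace (- ((a e * a e + b e * b e) * / e)) with (- (a e * a e * / e) + - (b e * b e * / e)) by ring.
    rewrite exp_plus, <- (E1_exp (a e * a e * / e)), <- (E1_exp (b e * b e * / e)). ring. }
  split.
  { apply SmR_smooth. apply (SmR_mult (fun e => 1 + a e * _)); (apply (SmR_plus (fun _ => 1)); [apply SmR_const|]);
    apply (SmR_mult a) || apply (SmR_mult b); assumption. }
  destruct (Hn 1%nat) as [c1 [e1 [He1 B1]]].
  destruct (near_half (fun e => a e + b e - 1) c1 e1 He1) as [e2 [He2 B2]].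
  { intros e He. specialize (B1 e He). rewrite normR in B1. exact B1. }
  intros m.
  destruct (exp_negl (fun e => a e * a e + b e * b e) e2 He2) with (m := m) as [c [_ [_ B3]]].
  { intros e He. specialize (B2 e He). apply Rabs_le_between in B2.
    assert (Hx : forall x y : R, -(1/2) <= x + y - 1 -> 1/8 <= x*x+y*y).
    { intros x y Hxy. assert (0 <= (x - y) * (x - y)) by apply Rle_0_sqr.
      assert (0 <= (x + y - 1/2) * (x + y - 1/2)) by apply Rle_0_sqr. lra. }
    apply Hx, B2. }
  exists c, e2. split; auto. intros e He. rewrite normR. rewrite EQ by lra. apply B3, He.
Qed.

Lemma normC (z : C) : @norm _ C_R_NormedModule z = Cmod z.
Proof.
  unfold norm; simpl; unfold prod_norm, Cmod; simpl.
  change (@norm _ R_NormedModule (fst z)) with (Rabs (fst z)).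
  change (@norm _ R_NormedModule (snd z)) with (Rabs (snd z)).
  f_equal. rewrite !Rmult_1_r, <- !Rabs_mult.
  rewrite (Rabs_right (fst z * fst z)), (Rabs_right (snd z * snd z)); try reflexivity;
  apply Rle_ge, Rle_0_sqr.
Qed.

Definition SmCC (F : R -> C) := SmR (fun x => fst (F x)) /\ SmR (fun x => snd (F x)).

Lemma SmCC_mult F G : SmCC F -> SmCC G -> SmCC (fun x => Cmult (F x) (G x)).
Proof.
  intros [F1 F2] [G1 G2]. split.
  - apply (SmR_ext (fun x => fst (F x) * fst (G x) + (-1) * (snd (F x) * snd (G x)))).
    + intros x _. simpl. ring.
    + apply SmR_plus; [apply SmR_mult; auto|]. apply (SmR_mult (fun _ => -1)); [apply SmR_const|].
      apply SmR_mult; auto.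
  - apply (SmR_ext (fun x => fst (F x) * snd (G x) + snd (F x) * fst (G x))).
    + intros x _. simpl. ring.
    + apply SmR_plus; apply SmR_mult; auto.
Qed.

Lemma SmCC_plus F G : SmCC F -> SmCC G -> SmCC (fun x => Cplus (F x) (G x)).
Proof.
  intros [F1 F2] [G1 G2]. split.
  - apply (SmR_ext (fun x => fst (F x) + fst (G x))); [intros; reflexivity|]. apply SmR_plus; auto.
  - apply (SmR_ext (fun x => snd (F x) + snd (G x))); [intros; reflexivity|]. apply SmR_plus; auto.
Qed.

Lemma SmCC_RtoC f : SmR f -> SmCC (fun x => RtoC (f x)).
Proof. intros H. split; [exact H|]. apply (SmR_ext (fun _ => 0)); [intros; reflexivity| apply SmR_const]. Qed.

Lemma SmCC_conj F : SmCC F -> SmCC (fun x => Cconj (F x)).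
Proof.
  intros [F1 F2]. split; [exact F1|].
  apply (SmR_ext (fun x => -1 * snd (F x))); [intros; simpl; ring|].
  apply (SmR_mult (fun _ => -1)); [apply SmR_const| exact F2].
Qed.

Definition zC (u : R -> C) (e : R) := (fst (u e) * fst (u e) + snd (u e) * snd (u e)) * / e.
Definition rC (u : R -> C) (e : R) : C := Cmult (Cconj (u e)) (RtoC (-1 * (/ e * E1 (zC u e)))).

Lemma rC_eq (u : R -> C) e : Cplus (RtoC 1) (Cmult (u e) (rC u e)) = RtoC (exp (- zC u e)).
Proof.
  rewrite <- E1_exp. unfold rC, zC, RtoC, Cconj, Cmult, Cplus. simpl. f_equal; ring.
Qed.

Lemma SmR_zC u : SmCC u -> SmR (zC u).
Proof.
  intros [U1 U2]. unfold zC.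
  apply (SmR_mult (fun e => fst (u e) * fst (u e) + snd (u e) * snd (u e))); [|apply SmR_inv].
  apply SmR_plus; apply SmR_mult; auto.
Qed.

Lemma SmCC_rC u : SmCC u -> SmCC (rC u).
Proof.
  intros Hu. unfold rC. apply SmCC_mult; [apply SmCC_conj, Hu|].
  apply SmCC_RtoC. apply (SmR_mult (fun _ => -1)); [apply SmR_const|].
  apply (SmR_mult (fun e => / e)); [apply SmR_inv|]. apply SmR_E1, SmR_zC, Hu.
Qed.

Lemma gelfand_C : @gelfand_sm C_R_NormedModule Cplus Cmult (RtoC 1%R).
Proof.
  intros a b [Sa [Na [ca [ea [Hea Ba]]]]] [Sb [Nb [cb [eb [Heb Bb]]]]] [_ Hn].
  apply smoothC_split in Sa. apply smoothC_split in Sb.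
  assert (Kr : forall (u : R -> C) N c eu, SmCC u -> 0 < eu ->
     (forall e, 0 < e <= eu -> @norm _ C_R_NormedModule (u e) <= c * / e ^ N) ->
     @moderate_sm C_R_NormedModule (rC u)).
  { intros u N c eu Su Heu Bu. split.
    - destruct (SmCC_rC u Su). apply SmC; auto.
    - exists (S N), c, eu. split; auto. intros e He. rewrite normC.
      specialize (Bu e He). rewrite normC in Bu.
      assert (Hz : 0 <= zC u e).
      { unfold zC. apply Rmult_le_pos; [| apply Rlt_le, Rinv_0_lt_compat; lra].
        apply Rplus_le_le_0_compat; apply Rle_0_sqr. }
      assert (HE := E1_bound _ Hz).
      unfold rC. rewrite Cmod_mult, Cmod_conj, Cmod_R.
      rewrite Rabs_mult, Rabs_m1, Rmult_1_l, Rabs_mult,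
        (Rabs_right (/ e)) by (apply Rle_ge, Rlt_le, Rinv_0_lt_compat; lra).
      assert (Hie : 0 < / e) by (apply Rinv_0_lt_compat; lra).
      assert (Cmod (u e) * (/ e * Rabs (E1 (zC u e))) <= Cmod (u e) * / e).
      { apply Rmult_le_compat_l; [apply Cmod_ge_0|]. nra. }
      eapply Rle_trans; [exact H|].
      replace (c * / e ^ S N) with ((c * / e ^ N) * / e) by (simpl; field; split; [apply pow_nonzero|]; lra).
      apply Rmult_le_compat_r; lra. }
  pose proof (Kr a Na ca ea Sa Hea Ba) as Mr. pose proof (Kr b Nb cb eb Sb Heb Bb) as Ms.
  exists (rC a), (rC b).
  split; [exact Mr|]. split; [exact Ms|].
  assert (EQ : forall e,
    Cmult (Cplus (RtoC 1) (Cmult (a e) (rC a e))) (Cplus (RtoC 1) (Cmult (b e) (rC b e)))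
    = RtoC (exp (- ((fst (a e) * fst (a e) + snd (a e) * snd (a e) +
                    (fst (b e) * fst (b e) + snd (b e) * snd (b e))) * / e)))).
  { intros e. rewrite !rC_eq.
    replace (- ((fst (a e) * fst (a e) + snd (a e) * snd (a e) +
                    (fst (b e) * fst (b e) + snd (b e) * snd (b e))) * / e))
      with (- zC a e + - zC b e) by (unfold zC; ring).
    rewrite exp_plus. unfold RtoC, Cmult. simpl. f_equal; ring. }
  split.
  { destruct (SmCC_mult _ _ (SmCC_plus _ _ (SmCC_RtoC _ (SmR_const 1)) (SmCC_mult _ _ Sa (SmCC_rC _ Sa)))
                                   (SmCC_plus _ _ (SmCC_RtoC _ (SmR_const 1)) (SmCC_mult _ _ Sb (SmCC_rC _ Sb)))) as [P1 P2].
    apply SmC; assumption. }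
  destruct (Hn 1%nat) as [c1 [e1 [He1 B1]]].
  destruct (near_half (fun e => fst (a e) + fst (b e) - 1) c1 e1 He1) as [e2 [He2 B2]].
  { intros e He. specialize (B1 e He). rewrite normC in B1. eapply Rle_trans; [|exact B1].
    eapply Rle_trans; [|apply Rmax_Cmod]. apply Rmax_l. }
  intros m.
  destruct (exp_negl (fun e => fst (a e) * fst (a e) + snd (a e) * snd (a e) +
                    (fst (b e) * fst (b e) + snd (b e) * snd (b e))) e2 He2) with (m := m) as [c [_ [_ B3]]].
  { intros e He. specialize (B2 e He). apply Rabs_le_between in B2.
    assert (Hx : forall x y x' y' : R, -(1/2) <= x + y - 1 -> 1/8 <= x*x+x'*x'+(y*y+y'*y')).
    { intros x y x' y' Hxy. assert (0 <= (x - y) * (x - y)) by apply Rle_0_sqr.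
      assert (0 <= (x + y - 1/2) * (x + y - 1/2)) by apply Rle_0_sqr.
      assert (0 <= x' * x') by apply Rle_0_sqr. assert (0 <= y' * y') by apply Rle_0_sqr. lra. }
    apply Hx, B2. }
  exists c, e2. split; auto. intros e He. rewrite normC. rewrite EQ, Cmod_R. apply B3, He.
Qed.

Theorem lemma4p5 :
  @gelfand_sm R_NormedModule Rplus Rmult 1%R /\
  @gelfand_sm C_R_NormedModule Cplus Cmult (RtoC 1%R).
Proof. split; [exact gelfand_R| exact gelfand_C]. Qed.
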